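(* Let $\mathcal{C} \subseteq \mathcal{L}(M_n)$ be a right-CP-invariant convex cone. Then for a linear map $\Psi: M_n\to M_n$, we have $\Psi^{\dagger} \circ \Phi \in \mathcal{CP}(M_n)$ for all $\Phi \in \mathcal{C}$ if and only if $\Psi \in \mathcal{C}^{\circ}$.
   Context: $M_n$ is the space of $n\times n$ complex matrices, $\mathcal{L}(M_n)$ the space of linear maps $M_n\to M_n$, and $\mathcal{CP}(M_n)$ the cone of completely positive maps on $M_n$. For $\Phi\in\mathcal L(M_n)$, $\Phi^\dagger$ is the linear map with $\mathrm{Tr}(\Phi(X)Y)=\mathrm{Tr}(X\Phi^\dagger(Y))$ for all $X,Y\in M_n$. With $\{\mathbf e_i\}$ the standard basis of $\mathbb{C}^n$ and $E=\sum_{i,j=1}^n \mathbf e_i\mathbf e_j^*\otimes\mathbf e_i\mathbf e_j^*$, the Choi matrix of $\Phi$ is $C_\Phi = (\mathrm{id}_n\otimes\Phi)(E)$. The dual cone of a cone $\mathcal C\subseteq\mathcal L(M_n)$ is $\mathcal{C}^\circ = \{\Psi\in\mathcal L(M_n) : \mathrm{Tr}(C_\Phi C_\Psi)\ge 0 \text{ for all }\Phi\in\mathcal C\}$. A cone $\mathcal C\subseteq\mathcal L(M_n)$ is right-CP-invariant if $\Omega\circ\Psi\in\mathcal C$ whenever $\Omega\in\mathcal C$ and $\Psi\in\mathcal{CP}(M_n)$. *)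

(* Defs.v *)
(* Complex numbers are modelled by algC (algebraic complex
   numbers, a numClosedFieldType); M_n is 'M[algC]_n. *)
From HB Require Import structures.
From mathcomp Require Import all_boot all_order all_algebra.
From mathcomp Require Import algC.
Set Implicit Arguments. Unset Strict Implicit. Unset Printing Implicit Defensive.
Import Order.TTheory GRing.Theory Num.Theory.
Local Open Scope ring_scope.

Notation Mn n := 'M[algC]_n.

(* Positive semidefinite: Hermitian with nonnegative quadratic form
   (on algC, "0 <= z" means z is a nonnegative real). *)
Definition psd (m : nat) (A : 'M[algC]_m) : Prop :=
  A \is hermsymmx /\ forall x : 'cV[algC]_m, 0 <= ((map_mx Num.conj x)^T *m A *m x) 0 0.

(* M_k (x) M_n is identified with 'M_(k*n), the index (a,i) (a : 'I_k the
   outer index, i : 'I_n the inner one) being mxvec_index a i. *)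
Definition pr_idx (k n : nat) (p : 'I_(k * n)) : 'I_k * 'I_n :=
  enum_val (cast_ord (esym (mxvec_cast k n)) p).

Definition blk (k n : nat) (X : 'M[algC]_(k * n)) (a b : 'I_k) : Mn n :=
  \matrix_(i, j) X (mxvec_index a i) (mxvec_index b j).

Definition ampl (k n : nat) (Phi : Mn n -> Mn n) (X : 'M[algC]_(k * n))
  : 'M[algC]_(k * n) :=
  \matrix_(p, q) Phi (blk X (pr_idx p).1 (pr_idx q).1) (pr_idx p).2 (pr_idx q).2.

Definition CP (n : nat) (Phi : Mn n -> Mn n) : Prop :=
  linear Phi /\
  forall (k : nat) (X : 'M[algC]_(k * n)), psd X -> psd (ampl Phi X).

(* E = sum_{i,j} e_i e_j^H (x) e_i e_j^H in M_n (x) M_n *)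
Definition Emax (n : nat) : 'M[algC]_(n * n) :=
  \matrix_(p, q) (((pr_idx p).1 == (pr_idx p).2)
                  && ((pr_idx q).1 == (pr_idx q).2))%:R.

Definition choi (n : nat) (Phi : Mn n -> Mn n) : 'M[algC]_(n * n) :=
  ampl Phi (Emax n).

(* Phi^dagger: the map with Tr(Phi(X) Y) = Tr(X Phi^dagger(Y));
   explicitly (Phi^dagger Y)_{ij} = Tr(Phi(E_ji) Y), E_ji = e_j e_i^H. *)
Definition dagger (n : nat) (Phi : Mn n -> Mn n) : Mn n -> Mn n :=
  fun Y => \matrix_(i, j) \tr (Phi (delta_mx j i) *m Y).

Definition dual_cone (n : nat) (C : (Mn n -> Mn n) -> Prop) (Psi : Mn n -> Mn n)
  : Prop :=
  linear Psi /\ forall Phi, C Phi -> 0 <= \tr (choi Phi *m choi Psi).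

Definition convex_cone (n : nat) (C : (Mn n -> Mn n) -> Prop) : Prop :=
  (forall Phi, C Phi -> linear Phi) /\
  (forall Phi1 Phi2, C Phi1 -> C Phi2 -> C (fun X => Phi1 X + Phi2 X)) /\
  (forall (c : algC) Phi, 0 <= c -> C Phi -> C (fun X => c *: Phi X)).

Definition right_CP_invariant (n : nat) (C : (Mn n -> Mn n) -> Prop) : Prop :=
  forall Omega Psi, C Omega -> CP Psi -> C (Omega \o Psi).

Lemma daggerP (n : nat) (Phi : Mn n -> Mn n) : linear Phi ->
  forall X Y : Mn n, \tr (Phi X *m Y) = \tr (X *m dagger Phi Y).
Proof.
move=> lf X Y.
have P0 : Phi 0 = 0.
  by have := lf (-1) 0 0; rewrite scaler0 addr0 scaleN1r addNr.
have PD : {morph Phi : u v / u + v}.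
  by move=> u v; have := lf 1 u v; rewrite !scale1r.
have PZ : forall a u, Phi (a *: u) = a *: Phi u.
  by move=> a u; have := lf a u 0; rewrite !addr0 P0 addr0.
rewrite [X in Phi X]matrix_sum_delta (big_morph Phi PD P0).
under eq_bigr => i _ do rewrite (big_morph Phi PD P0).
rewrite mulmx_suml raddf_sum /mxtrace.
apply: eq_bigr => i _; rewrite mulmx_suml raddf_sum mxE.
apply: eq_bigr => j _; rewrite PZ -scalemxAl /dagger mxE; exact: mxtraceZ.
Qed.

(* Main.v *)
Require Import Defs.
From HB Require Import structures.
From mathcomp Require Import all_boot all_order all_algebra algC ring.
Import Order.TTheory GRing.Theory Num.Theory.
Local Open Scope ring_scope.
Set Implicit Arguments. Unset Strict Implicit. Unset Printing Implicit Defensive.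

Section Lin.
Variables (n : nat) (Phi : Mn n -> Mn n) (lf : linear Phi).
Lemma lin0 : Phi 0 = 0.
Proof. by have := lf (-1) 0 0; rewrite scaler0 addr0 scaleN1r addNr. Qed.
Lemma linD : {morph Phi : u v / u + v}.
Proof. by move=> u v; have := lf 1 u v; rewrite !scale1r. Qed.
Lemma linZ a u : Phi (a *: u) = a *: Phi u.
Proof. by have := lf a u 0; rewrite !addr0 lin0 addr0. Qed.
Lemma lin_sum (I : finType) (P : pred I) (F : I -> Mn n) :
  Phi (\sum_(i | P i) F i) = \sum_(i | P i) Phi (F i).
Proof. exact: (big_morph Phi linD lin0). Qed.
Lemma lin_expand X : Phi X = \sum_p \sum_q X p q *: Phi (delta_mx p q).
Proof.
rewrite [X in Phi X]matrix_sum_delta lin_sum; apply: eq_bigr => p _.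
by rewrite lin_sum; apply: eq_bigr => q _; rewrite linZ.
Qed.
End Lin.

Lemma pr_idxK k n (a : 'I_k) (i : 'I_n) : pr_idx (mxvec_index a i) = (a, i).
Proof. by rewrite /pr_idx /mxvec_index cast_ordK enum_rankK. Qed.

Lemma sum_idx k n (F : 'I_(k * n) -> algC) :
  \sum_p F p = \sum_a \sum_i F (mxvec_index a i).
Proof.
rewrite pair_bigA /=.
rewrite (reindex (fun ai : 'I_k * 'I_n => mxvec_index ai.1 ai.2)) //=.
exists (fun p => pr_idx p) => [[a i] _ | p _] /=; first by rewrite pr_idxK.
by case/mxvec_indexP: p => a i; rewrite pr_idxK.
Qed.

Lemma amplE k n Phi (X : 'M_(k * n)) a i b j :
  ampl Phi X (mxvec_index a i) (mxvec_index b j) = Phi (blk X a b) i j.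
Proof. by rewrite /ampl mxE !pr_idxK. Qed.

Lemma blk_Emax n (p q : 'I_n) : blk (Emax n) p q = delta_mx p q.
Proof. by apply/matrixP => i j; rewrite !mxE !pr_idxK /= eq_sym [q == _]eq_sym. Qed.

Lemma choiE n Phi (p i q j : 'I_n) :
  choi Phi (mxvec_index p i) (mxvec_index q j) = Phi (delta_mx p q) i j.
Proof. by rewrite /choi amplE blk_Emax. Qed.

Definition qf m (A : 'M[algC]_m) (x : 'cV[algC]_m) :=
  ((map_mx Num.conj x)^T *m A *m x) 0 0.

Lemma qfE m (A : 'M[algC]_m) x :
  qf A x = \sum_p \sum_q (x p 0)^* * A p q * x q 0.
Proof.
rewrite /qf mxE.
under eq_bigr => q _ do rewrite mxE big_distrl /=.
rewrite exchange_big /=; apply: eq_bigr => p _.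
by apply: eq_bigr => q _; rewrite !mxE.
Qed.
Definition bf m (A : 'M[algC]_m) (x y : 'cV[algC]_m) :=
  ((map_mx Num.conj x)^T *m A *m y) 0 0.

Lemma bfE m (A : 'M[algC]_m) x y :
  bf A x y = \sum_p \sum_q (x p 0)^* * A p q * y q 0.
Proof.
rewrite /bf mxE.
under eq_bigr => q _ do rewrite mxE big_distrl /=.
rewrite exchange_big /=; apply: eq_bigr => p _.
by apply: eq_bigr => q _; rewrite !mxE.
Qed.
Lemma qf_bf m (A : 'M[algC]_m) x : qf A x = bf A x x. Proof. by []. Qed.
Lemma bfDl m (A : 'M[algC]_m) x y z : bf A (x + y) z = bf A x z + bf A y z.
Proof.
rewrite !bfE -big_split; apply: eq_bigr => p _; rewrite -big_split.
by apply: eq_bigr => q _; rewrite mxE rmorphD /= !mulrDl.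
Qed.
Lemma bfDr m (A : 'M[algC]_m) x y z : bf A z (x + y) = bf A z x + bf A z y.
Proof.
rewrite !bfE -big_split; apply: eq_bigr => p _; rewrite -big_split.
by apply: eq_bigr => q _; rewrite mxE !mulrDr.
Qed.
Lemma bfZl m (A : 'M[algC]_m) c x z : bf A (c *: x) z = c^* * bf A x z.
Proof.
rewrite !bfE big_distrr; apply: eq_bigr => p _; rewrite big_distrr.
by apply: eq_bigr => q _; rewrite mxE rmorphM /= !mulrA.
Qed.
Lemma bfZr m (A : 'M[algC]_m) c x z : bf A z (c *: x) = c * bf A z x.
Proof.
rewrite !bfE big_distrr; apply: eq_bigr => p _; rewrite big_distrr.
by apply: eq_bigr => q _; rewrite mxE mulrCA.
Qed.
Lemma bf_delta m (A : 'M[algC]_m) i j :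
  bf A (delta_mx i 0) (delta_mx j 0) = A i j.
Proof.
rewrite bfE (bigD1 i) //= [X in _ + X]big1 => [|p pi]; last first.
  by apply: big1 => q _; rewrite mxE (negbTE pi) /= rmorph0 !mul0r.
rewrite addr0 (bigD1 j) //= [X in _ + X]big1 => [|q qj]; last first.
  by rewrite [delta_mx j 0 q 0]mxE (negbTE qj) mulr0.
by rewrite !mxE !eqxx /= rmorph1 mul1r mulr1 addr0.
Qed.

Lemma psd_herm m (A : 'M[algC]_m) : (forall x, 0 <= qf A x) -> A \is hermsymmx.
Proof.
move=> H; apply/is_hermitianmxP; rewrite expr0 scale1r.
apply/matrixP => i j; rewrite !mxE.
have R x : (qf A x)^* = qf A x by apply/CrealP/ger0_real.
pose ei := delta_mx i 0 : 'cV[algC]_m; pose ej := delta_mx j 0 : 'cV[algC]_m.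
have E c : qf A (ei + c *: ej) = A i i + c^* * c * A j j + c * A i j + c^* * A j i.
  rewrite qf_bf !(bfDl, bfDr, bfZl, bfZr) !bf_delta.
  by rewrite mulrA; ring.
have R1 := R (ei + 1 *: ej); have R2 := R (ei + 'i *: ej).
have Ri := R ei; have Rj := R ej.
rewrite qf_bf bf_delta in Ri; rewrite qf_bf bf_delta in Rj.
rewrite !E !rmorphD /= !rmorphM /= !conjCK conjCi !Ri !Rj rmorph1 in R1 R2.
have K1 : 'i * - 'i = 1 :> algC by rewrite mulrN -expr2 sqrCi opprK.
have K2 : - 'i * 'i = 1 :> algC by rewrite mulNr -expr2 sqrCi opprK.
rewrite K1 K2 !mul1r in R2; rewrite !mul1r in R1.
move: R1 R2; set a := A i j; set b := A j i; set u := A i i; set v := A j j.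
move=> R1 R2.
have h1 : a^* + b^* - (a + b) = 0.
  by rewrite -(subrr (u + v + a + b)) -{1}R1; ring.
have h2 : 'i * (b^* - a^* - (a - b)) = 0.
  by rewrite -(subrr (u + v + 'i * a + - 'i * b)) -{1}R2; ring.
move/eqP: h2; rewrite mulf_eq0 (negbTE (neq0Ci _)) /= => /eqP h2.
have : (b^* - a) * 2 = 0 by rewrite -[RHS](addr0 0) -{1}h1 -h2; ring.
by move/eqP; rewrite mulf_eq0 pnatr_eq0 orbF subr_eq0 => /eqP.
Qed.

Lemma psdP m (A : 'M[algC]_m) : psd A <-> (forall x, 0 <= qf A x).
Proof. by split=> [[_ H] //|H]; split; [exact: psd_herm|]. Qed.


Lemma psd_decomp m (X : 'M[algC]_m) : psd X ->
  exists (d : 'I_m -> algC) (P : 'M[algC]_m), (forall r, 0 <= d r) /\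
    forall p q, X p q = \sum_r d r * (P r p)^* * P r q.
Proof.
move=> HX; have [Xh _] := HX.
pose P := spectralmx X; pose D := spectral_diag X.
pose Q := map_mx Num.conj P^T.
have PU : P *m Q = 1%:M by apply/unitarymxP/spectral_unitarymx.
have XE : X = Q *m diag_mx D *m P.
  have /orthomx_spectralP XE := hermitian_normalmx Xh.
  by rewrite {1}XE -/P -/D invmx_unitary ?spectral_unitarymx.
exists (fun r => D 0 r), P; split; last first.
  move=> p q; rewrite {1}XE mxE; apply: eq_bigr => r _.
  by rewrite mul_mx_diag !mxE [_ * D 0 r]mulrC.
move=> r; have := (proj1 (psdP X) HX) (col r Q).
suff -> : qf X (col r Q) = D 0 r by [].
rewrite /qf map_col /Q -map_mx_comp map_mx_id => [|z]; last by rewrite /= conjCK.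
rewrite tr_col trmxK -row_mul.
have -> : (row r (P *m X) *m col r Q) 0 0 = (P *m X *m Q) r r.
  by rewrite !mxE; apply: eq_bigr => k _; rewrite !mxE.
by rewrite XE !mulmxA PU mul1mx -!mulmxA PU mulmx1 mxE eqxx mulr1n.
Qed.

Ltac atd d tac := match d with
  | O => tac
  | S ?d' => under eq_bigr => ? _ do atd d' tac
  end.

Ltac xch d := match d with
  | O => rewrite exchange_big /=
  | S ?d' => under eq_bigr => ? _ do xch d'
  end.

Lemma reorder6 k n (G : 'I_k -> 'I_n -> 'I_k -> 'I_n -> 'I_n -> 'I_n -> algC) :
  \sum_a \sum_i \sum_b \sum_j \sum_p \sum_q G a i b j p q =
  \sum_p \sum_i \sum_q \sum_j \sum_a \sum_b G a i b j p q.
Proof.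
xch 3%N; xch 2%N; xch 1%N; xch 0%N; xch 1%N.
xch 4%N; xch 3%N; xch 2%N; xch 4%N; xch 3%N.
by [].
Qed.

Lemma rank1 k n (Phi : Mn n -> Mn n) (lf : linear Phi) (y : 'I_k -> 'I_n -> algC) (x : 'cV_(k*n)) :
  \sum_a \sum_i \sum_b \sum_j ((x (mxvec_index a i) 0)^* *
     Phi (\matrix_(p, q) (y a p * (y b q)^*)) i j * x (mxvec_index b j) 0)
  = qf (choi Phi) (\col_t (\sum_b (y b (pr_idx t).1)^* * x (mxvec_index b (pr_idx t).2) 0)).
Proof.
under eq_bigr => a _ do under eq_bigr => i _ do under eq_bigr => b _ do
  under eq_bigr => j _ do rewrite (lin_expand lf) summxE big_distrr big_distrl /=.
under eq_bigr => a _ do under eq_bigr => i _ do under eq_bigr => b _ do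
  under eq_bigr => j _ do under eq_bigr => p _ do
  rewrite summxE big_distrr big_distrl /=.
under eq_bigr => a _ do under eq_bigr => i _ do under eq_bigr => b _ do
  under eq_bigr => j _ do under eq_bigr => p _ do under eq_bigr => q _ do
  rewrite !mxE.
rewrite reorder6.
symmetry; rewrite qfE sum_idx.
under eq_bigr => p _ do under eq_bigr => i _ do rewrite sum_idx.
under eq_bigr => p _ do under eq_bigr => i _ do under eq_bigr => q _ do
  under eq_bigr => j _ do (rewrite !mxE !pr_idxK /= blk_Emax rmorph_sum /=
     big_distrl big_distrl /=).
under eq_bigr => p _ do under eq_bigr => i _ do under eq_bigr => q _ do
  under eq_bigr => j _ do under eq_bigr => a _ do rewrite big_distrr /=.
apply: eq_bigr => p _; apply: eq_bigr => i _; apply: eq_bigr => q _.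
apply: eq_bigr => j _; apply: eq_bigr => a _; apply: eq_bigr => b _.
rewrite rmorphM /= conjCK; ring.
Qed.

Lemma choi_CP n (Phi : Mn n -> Mn n) : linear Phi ->
  (forall w, 0 <= qf (choi Phi) w) -> CP Phi.
Proof.
move=> lf Hw; split => // k X HX; apply/psdP => x.
have [d [P [d0 XE]]] := psd_decomp HX.
pose y r (a : 'I_k) (p : 'I_n) := (P r (mxvec_index a p))^*.
have BE a b : blk X a b = \sum_r d r *: \matrix_(p, q) (y r a p * (y r b q)^*).
  apply/matrixP => p q; rewrite summxE !mxE XE; apply: eq_bigr => r _.
  by rewrite !mxE /y conjCK mulrA.
have -> : qf (ampl Phi X) x = \sum_r d r * (\sum_a \sum_i \sum_b \sum_j
   ((x (mxvec_index a i) 0)^* *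
     Phi (\matrix_(p, q) (y r a p * (y r b q)^*)) i j * x (mxvec_index b j) 0)).
  rewrite qfE sum_idx.
  under eq_bigr => a _ do under eq_bigr => i _ do rewrite sum_idx.
  under eq_bigr => a _ do under eq_bigr => i _ do under eq_bigr => b _ do
    under eq_bigr => j _ do rewrite amplE BE (lin_sum lf) summxE big_distrr big_distrl /=.
  xch 3%N; xch 2%N; xch 1%N; xch 0%N.
  apply: eq_bigr => r _; rewrite !big_distrr; apply: eq_bigr => a _.
  rewrite !big_distrr; apply: eq_bigr => i _.
  rewrite !big_distrr; apply: eq_bigr => b _.
  rewrite !big_distrr; apply: eq_bigr => j _.
  rewrite (linZ lf) mxE; set u := (x _ 0)^*; set v := Phi _ i j; set w := x _ 0.
  by change (u * (d r * v) * w = d r * (u * v * w)); ring.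
apply: sumr_ge0 => r _; apply: mulr_ge0 => //.
by rewrite (rank1 lf).
Qed.

Lemma sum_delta (T : finType) (a : T) (F : T -> algC) :
  \sum_i ((a == i)%:R * F i) = F a.
Proof.
rewrite (bigD1 a) //= eqxx mul1r big1 ?addr0 // => i /negbTE.
by rewrite eq_sym => ->; rewrite mul0r.
Qed.

Lemma shuf (u c1 c2 w : algC) : u * (c1 * c2) * w = c1 * (c2 * (u * w)).
Proof. by ring. Qed.

Lemma Emax_psd n : psd (Emax n).
Proof.
apply/psdP => x; rewrite qfE sum_idx.
under eq_bigr => a _ do under eq_bigr => i _ do rewrite sum_idx.
under eq_bigr => a _ do under eq_bigr => i _ do under eq_bigr => b _ do
  under eq_bigr => j _ do rewrite mxE !pr_idxK /= -mulnb natrM shuf.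
under eq_bigr => a _ do under eq_bigr => i _ do under eq_bigr => b _ do
  rewrite -big_distrr /=.
under eq_bigr => a _ do under eq_bigr => i _ do rewrite -big_distrr /=.
under eq_bigr => a _ do rewrite sum_delta.
under eq_bigr => a _ do under eq_bigr => b _ do rewrite sum_delta.
under eq_bigr => a _ do rewrite -big_distrr /=.
rewrite -big_distrl -rmorph_sum /=.
by rewrite mulrC; exact: mul_conjC_ge0.
Qed.

Definition vv n : 'cV[algC]_(n * n) := \col_t ((pr_idx t).1 == (pr_idx t).2)%:R.

Lemma shuf2 (c1 c2 m : algC) : c1 * m * c2 = c1 * (c2 * m).
Proof. by ring. Qed.

Lemma qf_v n (M : 'M[algC]_(n * n)) :
  qf M (vv n) = \sum_p \sum_q M (mxvec_index p p) (mxvec_index q q).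
Proof.
rewrite qfE sum_idx.
under eq_bigr => a _ do under eq_bigr => i _ do rewrite sum_idx.
under eq_bigr => a _ do under eq_bigr => i _ do under eq_bigr => b _ do
  under eq_bigr => j _ do rewrite !mxE !pr_idxK /= rmorph_nat shuf2.
under eq_bigr => a _ do under eq_bigr => i _ do under eq_bigr => b _ do
  rewrite -big_distrr /=.
under eq_bigr => a _ do under eq_bigr => i _ do rewrite -big_distrr /=.
under eq_bigr => a _ do rewrite sum_delta.
by under eq_bigr => a _ do under eq_bigr => b _ do rewrite sum_delta.
Qed.

Lemma tr_choi n (Phi Psi : Mn n -> Mn n) :
  \tr (choi Phi *m choi Psi) = qf (choi (dagger Psi \o Phi)) (vv n).
Proof.
rewrite qf_v /mxtrace sum_idx.
under eq_bigr => p _ do under eq_bigr => i _ do rewrite mxE sum_idx.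
under eq_bigr => p _ do under eq_bigr => i _ do under eq_bigr => q _ do
  under eq_bigr => j _ do rewrite !choiE.
xch 1%N; xch 2%N.
apply: eq_bigr => p _; apply: eq_bigr => q _.
rewrite choiE /= /dagger mxE /mxtrace.
apply: eq_bigr => j _; rewrite mxE; apply: eq_bigr => i _.
by rewrite mulrC.
Qed.

Lemma mul3E m (B M C : 'M[algC]_m) i j :
  (B *m M *m C) i j = \sum_p \sum_q B i p * M p q * C q j.
Proof.
rewrite mxE; under eq_bigr => q _ do rewrite mxE big_distrl /=.
by rewrite exchange_big.
Qed.

Definition conjmap n (B : Mn n) : Mn n -> Mn n :=
  fun X => B *m X *m map_mx Num.conj B^T.

Lemma conjmap_lin n (B : Mn n) : linear (conjmap B).
Proof.
by move=> a X Y; rewrite /conjmap mulmxDr mulmxDl -scalemxAr -scalemxAl.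
Qed.

Lemma conjmap_CP n (B : Mn n) : CP (conjmap B).
Proof.
split; first exact: conjmap_lin.
move=> k X /psdP HX; apply/psdP => x.
pose y : 'cV_(k * n) := \col_t (\sum_j (B j (pr_idx t).2)^* * x (mxvec_index (pr_idx t).1 j) 0).
suff -> : qf (ampl (conjmap B) X) x = qf X y by [].
rewrite qfE sum_idx.
under eq_bigr => a _ do under eq_bigr => i _ do rewrite sum_idx.
under eq_bigr => a _ do under eq_bigr => i _ do under eq_bigr => b _ do
  under eq_bigr => j _ do rewrite amplE /conjmap mul3E big_distrr big_distrl /=.
under eq_bigr => a _ do under eq_bigr => i _ do under eq_bigr => b _ do
  under eq_bigr => j _ do under eq_bigr => p _ do rewrite big_distrr big_distrl /=.
xch 3%N; xch 2%N; xch 1%N; xch 2%N; xch 4%N; xch 3%N.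
symmetry; rewrite qfE sum_idx.
under [X in X = _]eq_bigr => a _ do under eq_bigr => i _ do rewrite sum_idx.
under [X in X = _]eq_bigr => a _ do under eq_bigr => p _ do under eq_bigr => b _ do
  under eq_bigr => q _ do rewrite !mxE !pr_idxK /= rmorph_sum /= big_distrl big_distrl /=.
under [X in X = _]eq_bigr => a _ do under eq_bigr => p _ do under eq_bigr => b _ do
  under eq_bigr => q _ do under eq_bigr => i _ do rewrite big_distrr /=.
apply: eq_bigr => a _; apply: eq_bigr => p _; apply: eq_bigr => b _.
apply: eq_bigr => q _; apply: eq_bigr => i _; apply: eq_bigr => j _.
rewrite !mxE rmorphM /= conjCK; ring.
Qed.

Lemma sum_delta' (T : finType) (a : T) (F : T -> algC) :
  \sum_i ((i == a)%:R * F i) = F a.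
Proof. by under eq_bigr => i _ do rewrite eq_sym; exact: sum_delta. Qed.

Lemma shuf3 (b c1 c2 d : algC) : b * (c1 * c2) * d = c1 * (c2 * (b * d)).
Proof. by ring. Qed.

Lemma mul_delta3 m (B C : 'M[algC]_m) p q r s :
  (B *m delta_mx p q *m C) r s = B r p * C q s.
Proof.
rewrite mul3E.
under eq_bigr => u _ do under eq_bigr => v _ do rewrite mxE -mulnb natrM shuf3.
under eq_bigr => u _ do rewrite -big_distrr /= sum_delta'.
by rewrite sum_delta'.
Qed.

Definition Bw n (w : 'cV[algC]_(n * n)) : Mn n :=
  \matrix_(r, p) (w (mxvec_index r p) 0)^*.

Lemma choi_conjmap n (Theta : Mn n -> Mn n) (lt : linear Theta) w :
  qf (choi (Theta \o conjmap (Bw w))) (vv n) = qf (choi Theta) w.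
Proof.
rewrite qf_v.
under eq_bigr => p _ do under eq_bigr => q _ do
  rewrite choiE /= /conjmap (lin_expand lt) summxE.
under eq_bigr => p _ do under eq_bigr => q _ do under eq_bigr => r _ do
  rewrite summxE.
xch 1%N; xch 0%N; xch 2%N.
symmetry; rewrite qfE sum_idx.
under [X in X = _]eq_bigr => a _ do under eq_bigr => i _ do rewrite sum_idx.
apply: eq_bigr => r _; apply: eq_bigr => p _; apply: eq_bigr => s _.
apply: eq_bigr => q _.
rewrite choiE mxE mul_delta3 !mxE conjCK; ring.
Qed.

Lemma dagger_lin n (Psi : Mn n -> Mn n) : linear (dagger Psi).
Proof.
move=> a X Y; apply/matrixP => i j.
by rewrite !mxE mulmxDr -scalemxAr mxtraceD mxtraceZ.
Qed.

Lemma comp_lin n (f g : Mn n -> Mn n) : linear f -> linear g -> linear (f \o g).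
Proof. by move=> lf lg a X Y /=; rewrite lg lf. Qed.

Theorem proposition4p1 (n : nat) (C : (Mn n -> Mn n) -> Prop)
  (HC : convex_cone C) (HCP : right_CP_invariant C)
  (Psi : Mn n -> Mn n) (HPsi : linear Psi) :
  (forall Phi, C Phi -> CP (dagger Psi \o Phi)) <-> dual_cone C Psi.
Proof.
split.
  move=> H; split => // Phi CPhi; rewrite tr_choi.
  have [_ cp] := H Phi CPhi.
  by move: (cp n (Emax n) (Emax_psd n)) => /psdP /(_ (vv n)).
case=> _ Hd Phi CPhi.
have lP := HC.1 Phi CPhi.
have lT : linear (dagger Psi \o Phi) := comp_lin (dagger_lin Psi) lP.
refine (choi_CP lT _) => w.
have := Hd _ (HCP _ _ CPhi (conjmap_CP (Bw w))).
rewrite tr_choi -(choi_conjmap lT w); exact.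
Qed.
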